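(* Let $\mathcal E$ be an exchangeability system for a noncommutative probability space $(\mathcal A,\phi)$, let $X_1,\dots,X_n\in\mathcal A$, let $\omega$ be a primitive $n$-th root of unity and $X_j^\omega=\sum_{k=1}^n\omega^kX_j^{(k)}$. If $j_1<j_2<\dots<j_m$ is a subsequence of $1,2,\dots,n$ with $m<n$, then $\tilde\phi(X_{j_1}^\omega X_{j_2}^\omega\cdots X_{j_m}^\omega)=0$.
   Context: A noncommutative probability space is a pair $(\mathcal A,\phi)$ of a complex unital algebra $\mathcal A$ and a unital linear functional $\phi$. An exchangeability system $\mathcal E$ for $(\mathcal A,\phi)$ consists of a noncommutative probability space $(\mathcal U,\tilde\phi)$ and a family $(\iota_k)_{k\in\mathbb N}$ of embeddings (injective unital algebra homomorphisms) $\iota_k:\mathcal A\to\mathcal A_k\subseteq\mathcal U$ with $\tilde\phi\circ\iota_k=\phi$; write $X^{(k)}=\iota_k(X)$. It is required that for all $X_1,\dots,X_n\in\mathcal A$, all indices $i_1,\dots,i_n\in\mathbb N$ and every bijection $\sigma$ of $\mathbb N$, $\tilde\phi(X_1^{(i_1)}\cdots X_n^{(i_n)})=\tilde\phi(X_1^{(\sigma(i_1))}\cdots X_n^{(\sigma(i_n))})$. *)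

(* Defs.v *)
From HB Require Import structures.
From mathcomp Require Import all_boot all_order all_algebra.
From mathcomp Require Import reals.
From mathcomp Require Import complex.
Set Implicit Arguments. Unset Strict Implicit. Unset Printing Implicit Defensive.
Import Order.TTheory GRing.Theory Num.Theory.
Local Open Scope ring_scope.

Definition unital_linear_functional (C : fieldType) (A : algType C)
  (phi : A -> C) : Prop :=
  (forall (a : C) (x y : A), phi (a *: x + y) = a * phi x + phi y)
  /\ phi 1 = 1.

Definition algebra_embedding (C : fieldType) (A U : algType C)
  (f : A -> U) : Prop :=
  [/\ forall (a : C) (x y : A), f (a *: x + y) = a *: f x + f y,
      forall x y : A, f (x * y) = f x * f y,
      f 1 = 1 & injective f].

(* Exchangeability system (U, phit, (iota k)_k) for (A, phi); indices k : nat.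
   Words X_1^(i_1) ... X_n^(i_n) are encoded as sequences of pairs (X_l, i_l). *)
Definition exchangeability_system (C : fieldType) (A U : algType C)
  (phi : A -> C) (phit : U -> C) (iota : nat -> A -> U) : Prop :=
  [/\ unital_linear_functional phit,
      forall k, algebra_embedding (iota k),
      forall k (X : A), phit (iota k X) = phi X &
      forall (w : seq (A * nat)) (sigma : nat -> nat), bijective sigma ->
        phit (\prod_(p <- w) iota p.2 p.1)
        = phit (\prod_(p <- w) iota (sigma p.2) p.1)].

(* X^omega = sum_{k=1}^n omega^k X^(k); the paper's index k in {1,...,n}
   corresponds to our index k-1 in {0,...,n-1} (indices shifted by one). *)
Definition Xomega (C : fieldType) (A U : algType C) (iota : nat -> A -> U)
  (n : nat) (omega : C) (X : A) : U :=
  \sum_(k < n) omega ^+ k.+1 *: iota k X.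

(* Main.v *)
Require Import Defs.
From HB Require Import structures.
From mathcomp Require Import all_boot all_order all_algebra.
From mathcomp Require Import reals.
From mathcomp Require Import complex.
Import Order.TTheory GRing.Theory Num.Theory.
Local Open Scope ring_scope.

Definition shiftn (n : nat) (k : nat) : nat :=
  if @insub nat (fun k => k < n)%N 'I_n k is Some i then val (ordS i) else k.
Definition unshiftn (n : nat) (k : nat) : nat :=
  if @insub nat (fun k => k < n)%N 'I_n k is Some i then val (ord_pred i) else k.

Lemma shiftn_bij n : bijective (shiftn n).
Proof.
exists (unshiftn n) => k; rewrite /shiftn /unshiftn.
- case hk: (k < n)%N; last by rewrite !insubN ?hk.
  have -> : k = val (Ordinal hk) by [].
  by rewrite valK valK ordSK.
- case hk: (k < n)%N; last by rewrite !insubN ?hk.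
  have -> : k = val (Ordinal hk) by [].
  by rewrite valK valK ord_predK.
Qed.

Lemma shiftn_ord n (i : 'I_n) : shiftn n i = ordS i.
Proof. by rewrite /shiftn valK. Qed.

Theorem lemma2p4 (R : realType) (A U : algType R[i])
  (phi : A -> R[i]) (phit : U -> R[i]) (iota : nat -> A -> U)
  (hphi : unital_linear_functional phi)
  (hE : exchangeability_system phi phit iota)
  (n : nat) (X : 'I_n -> A) (omega : R[i])
  (homega : n.-primitive_root omega)
  (s : seq 'I_n)
  (hs : sorted (fun a b : 'I_n => (a < b)%N) s)
  (hm0 : (0 < size s)%N) (hmn : (size s < n)%N) :
  phit (\prod_(j <- s) Xomega iota n omega (X j)) = 0.
Proof.
case: hE => hl _ _ hex; case: hl => hlin _.
have phitD x y : phit (x + y) = phit x + phit y by have := hlin 1 x y; rewrite scale1r mul1r.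
have phit0 : phit 0 = 0.
  by apply: (addrI (phit 0)); rewrite -phitD !addr0.
have phitZ a x : phit (a *: x) = a * phit x by rewrite -[_ *: _]addr0 hlin phit0 addr0.
have phit_sum (I : finType) (F : I -> U) : phit (\sum_i F i) = \sum_i phit (F i).
  by apply: (big_morph phit phitD phit0).
case: s hs hm0 hmn => [//|x0 s'] _ _ hmn.
set s := x0 :: s' in hmn *.
set m := size s in hmn *.
set F := fun i : 'I_m => X (nth x0 s i).
have -> : \prod_(j <- s) Xomega iota n omega (X j)
    = \prod_(i < m) Xomega iota n omega (F i).
  by rewrite (big_nth x0) big_mkord.
rewrite /Xomega bigA_distr_bigA /=.
under eq_bigr => f _ do rewrite scaler_prod.
rewrite phit_sum.
under eq_bigr => f _ do rewrite phitZ.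
set c := fun f : {ffun 'I_m -> 'I_n} => \prod_(i < m) omega ^+ (f i).+1.
set g := fun f : {ffun 'I_m -> 'I_n} => phit (\prod_(i < m) iota (f i) (F i)).
rewrite -/(\sum_f c f * g f).
set h := fun f : {ffun 'I_m -> 'I_n} => ([ffun i => ordS (f i)] : {ffun 'I_m -> 'I_n}).
have hinj : injective h.
  move=> f1 f2 e; apply/ffunP => i.
  have := congr1 (fun f : {ffun 'I_m -> 'I_n} => f i) e; rewrite /h !ffunE => e'.
  by rewrite -(ordSK (f1 i)) e' ordSK.
have hc f : c (h f) = omega ^+ m * c f.
  have -> : omega ^+ m = \prod_(i < m) omega by rewrite prodr_const card_ord.
  rewrite /c -big_split /=.
  apply: eq_bigr => i _.
  rewrite ffunE exprS; have -> : nat_of_ord (ordS (f i)) = ((f i).+1 %% n)%N by [].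
  by rewrite prim_expr_mod.
have hg f : g (h f) = g f.
  rewrite /g.
  have e (f' : {ffun 'I_m -> 'I_n}) : \prod_(i < m) iota (f' i) (F i)
      = \prod_(p <- [seq (F i, val (f' i)) | i <- index_enum 'I_m]) iota p.2 p.1.
    by rewrite big_map.
  rewrite !e [RHS](hex _ _ (shiftn_bij n)) !big_map; congr phit.
  by apply: eq_bigr => i _; rewrite /= ffunE shiftn_ord.
set S := \sum_f c f * g f.
have hS : S = omega ^+ m * S.
  rewrite {1}/S (reindex_inj hinj) /= mulr_sumr.
  by apply: eq_bigr => f _; rewrite hc hg mulrA.
have : (1 - omega ^+ m) * S = 0 by rewrite mulrBl mul1r -hS subrr.
move/eqP; rewrite mulf_eq0 subr_eq0 => /orP [|/eqP //].
rewrite eq_sym -(prim_order_dvd homega) => /dvdn_leq.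
by rewrite /m /= ltn0Sn => /(_ isT); rewrite leqNgt hmn.
Qed.
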